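(* Let $A,B\in\mathbb{R}^{n\times n}$ satisfy $\mathrm{rank}(A-B)=\mathrm{rank}(A)-\mathrm{rank}(B)$, $A+A^T>0$ (positive definite) and $B+B^T\ge0$ (positive semidefinite). Then $\ker B=\ker(B+B^T)$. *)

(* Defs.v *)
From HB Require Import structures.
From mathcomp Require Import all_boot all_order all_algebra.
Set Implicit Arguments. Unset Strict Implicit. Unset Printing Implicit Defensive.
Import Order.TTheory GRing.Theory Num.Theory.
Local Open Scope ring_scope.

Definition posdef (R : realFieldType) (n : nat) (M : 'M[R]_n) : Prop :=
  forall x : 'cV[R]_n, x != 0 -> 0 < (x^T *m M *m x) 0 0.

Definition psd (R : realFieldType) (n : nat) (M : 'M[R]_n) : Prop :=
  forall x : 'cV[R]_n, 0 <= (x^T *m M *m x) 0 0.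

Definition ker_mx (R : realFieldType) (n : nat) (M : 'M[R]_n) : 'cV[R]_n -> Prop :=
  fun x => M *m x = 0.

(* Main.v *)
Require Import Defs.
From HB Require Import structures.
From mathcomp Require Import all_boot all_order all_algebra.
From mathcomp Require Import ring lra zify.
Import Order.TTheory GRing.Theory Num.Theory.
Local Open Scope ring_scope.

Lemma scal_tr (R : realFieldType) (n : nat) (p q : 'cV[R]_n) :
  (p^T *m q) 0 0 = (q^T *m p) 0 0.
Proof.
by rewrite -[in LHS](trmxK (p^T *m q)) trmx_mul trmxK mxE.
Qed.

Lemma qf_sym (R : realFieldType) (n : nat) (M : 'M[R]_n) (x : 'cV[R]_n) :
  (x^T *m (M + M^T) *m x) 0 0 = (x^T *m (M *m x)) 0 0 *+ 2.
Proof.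
rewrite mulmxDr mulmxDl mxE -trmx_mul -mulmxA [X in _ + X = _]scal_tr.
by rewrite mulr2n.
Qed.

Lemma eaddE (R : realFieldType) m k (A B : 'M[R]_(m, k)) i j :
  (A + B) i j = A i j + B i j.
Proof. by rewrite mxE. Qed.
Lemma escaleE (R : realFieldType) m k (a : R) (A : 'M[R]_(m, k)) i j :
  (a *: A) i j = a * A i j.
Proof. by rewrite mxE. Qed.

Lemma quad0 (R : realFieldType) (a b : R) :
  0 <= a -> (forall t, 0 <= a * t ^+ 2 + 2 * b * t) -> b = 0.
Proof.
move=> ha H.
have hc : 0 < (a + 1)^-1 by rewrite invr_gt0; lra.
set c := (a + 1)^-1 in hc.
have hc1 : c * (a + 1) = 1 by rewrite /c mulVf //; apply/eqP; lra.
have := H (- b * c).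
move=> h.
have hb2 : b ^+ 2 * c <= 0 by nra.
have : b ^+ 2 <= 0 by nra.
nra.
Qed.

Lemma psd_ker (R : realFieldType) (n : nat) (S : 'M[R]_n) (z : 'cV[R]_n) :
  S^T = S -> psd S -> (z^T *m S *m z) 0 0 = 0 -> S *m z = 0.
Proof.
move=> hS hp hz.
set w := S *m z.
have key : forall t : R, 0 <= (w^T *m S *m w) 0 0 * t ^+ 2 + 2 * (w^T *m w) 0 0 * t.
  move=> t.
  have := hp (z + t *: w).
  have -> : (z + t *: w)^T = z^T + t *: w^T by apply/matrixP => i j; rewrite !mxE.
  rewrite !mulmxDl !mulmxDr -!scalemxAl -!scalemxAr !eaddE !escaleE.
  have e2 : (w^T *m S *m z) 0 0 = (w^T *m w) 0 0 by rewrite -mulmxA.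
  have e1 : (z^T *m S *m w) 0 0 = (w^T *m w) 0 0.
    by rewrite -e2 -mulmxA scal_tr trmx_mul hS.
  rewrite hz e1 e2; nra.
have hb := @quad0 _ _ _ (hp w) key.
clearbody w.
apply/matrixP => i j; rewrite (ord1 j) [RHS]mxE.
move: hb; rewrite mxE => /psumr_eq0P H.
have h0 : forall k : 'I_n, true -> 0 <= w^T 0 k * w k 0.
  by move=> k _; rewrite mxE -expr2 sqr_ge0.
have := H h0 i isT.
by rewrite mxE => /eqP; rewrite mulf_eq0 orbb => /eqP.
Qed.
Lemma cap_lemma (R : realFieldType) (n : nat) (B C : 'M[R]_n)
  (h : \rank (B + C)%R = (\rank B + \rank C)%N) (p q : 'cV[R]_n) :
  B *m p = C *m q -> B *m p = 0.
Proof.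
move=> hpq.
set w := (B *m p)^T.
have hwB : (w <= B^T)%MS by rewrite /w trmx_mul submxMl.
have hwC : (w <= C^T)%MS by rewrite /w hpq trmx_mul submxMl.
have hcap : (B^T :&: C^T)%MS == 0.
  rewrite -mxrank_eq0.
  have h1 := mxrank_sum_cap B^T C^T.
  have h2 : (\rank (B^T + C^T)%R <= \rank (B^T + C^T)%MS)%N.
    by apply: mxrankS; apply: addmx_sub_adds.
  have h3 : (B + C)^T = B^T + C^T by apply/matrixP => i j; rewrite !mxE.
  move: h2; rewrite -h3 !mxrank_tr h => h2.
  move: h1; rewrite !mxrank_tr => h1.
  apply/eqP; lia.
have : (w <= B^T :&: C^T)%MS by rewrite sub_capmx hwB hwC.
rewrite (eqP hcap) submx0 => /eqP hw0.
by rewrite -(trmxK (B *m p)) -/w hw0 trmx0.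
Qed.

Theorem lemma3 (R : realFieldType) (n : nat) (A B : 'M[R]_n)
  (hrank : (\rank (A - B))%:Z = (\rank A)%:Z - (\rank B)%:Z)
  (hA : posdef (A + A^T)) (hB : psd (B + B^T)) :
  forall x : 'cV[R]_n, ker_mx B x <-> ker_mx (B + B^T) x.
Proof.
have hr : \rank (B + (A - B)%R)%R = (\rank B + \rank (A - B)%R)%N.
  have -> : (B + (A - B))%R = A by rewrite addrC subrK.
  lia.
have hS : (B + B^T)^T = B + B^T by apply/matrixP => i j; rewrite !mxE addrC.
have dir1 : forall y : 'cV[R]_n, B *m y = 0 -> (B + B^T) *m y = 0.
  move=> y hy; apply: (@psd_ker _ _ _ _ hS hB).
  by rewrite qf_sym hy mulmx0 mxE mul0rn.
have hAu : A \in unitmx.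
  rewrite unitmxE unitfE -det_tr; apply/negP => /det0P [v hv0 hvA].
  have hAv : A *m v^T = 0 by rewrite -(trmxK A) -trmx_mul hvA trmx0.
  have := hA (v^T); rewrite trmx_eq0 hv0 => /(_ isT).
  by rewrite qf_sym hAv mulmx0 mxE mul0rn ltxx.
move=> x; rewrite /ker_mx; split; first exact: dir1.
move=> hx.
set v := invmx A *m (B *m x).
have hAv : A *m v = B *m x by rewrite /v mulKVmx.
have hC : B *m (x - v) = (A - B) *m v.
  by rewrite mulmxBr mulmxBl hAv.
have hBxv := @cap_lemma _ _ _ _ hr _ _ hC.
have hSv : (B + B^T) *m v = 0.
  have := dir1 _ hBxv; rewrite mulmxBr hx sub0r => /eqP; rewrite oppr_eq0.
  by move/eqP.
have hBv : B *m x = B *m v by apply/subr0_eq; rewrite -mulmxBr.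
have hq : (v^T *m (A + A^T) *m v) 0 0 = 0.
  by rewrite qf_sym hAv hBv -qf_sym -mulmxA hSv mulmx0 mxE.
have v0 : v = 0.
  case: (eqVneq v 0) => // hv.
  by have := hA v hv; rewrite hq ltxx.
by rewrite -hAv v0 mulmx0.
Qed.
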